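(* Let $\varepsilon>0$ be rational and let $f:\mathbb{N}\to\mathbb{N}$ satisfy $f(n)\ge n\varepsilon$ for all $n\ge0$. Then for all $A\subseteq\mathbb{N}$ we have $\bar d(f[A])\le\frac{1}{\varepsilon}\bar d(A)$. In particular $f\in\mathscr{C}_{I_{\bar d=0}}$.
   Context: $\mathbb{N}=\{0,1,2,\dots\}$. For $A\subseteq\mathbb{N}$, $\bar d(A)=\limsup_{n\to\infty}\frac{|A\cap[0,n)|}{n}$. $\mathscr{C}_{I_{\bar d=0}}$ is the set of all finitary functions $f:\mathbb{N}^k\to\mathbb{N}$ ($k\ge1$) such that $\bar d(f[A^k])=0$ whenever $\bar d(A)=0$. *)

(* Defs.v *)
From HB Require Import structures.
From mathcomp Require Import all_boot all_order all_algebra.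
From mathcomp Require Import all_classical all_reals all_analysis.
Set Implicit Arguments. Unset Strict Implicit. Unset Printing Implicit Defensive.
Import Order.TTheory GRing.Theory Num.Theory.
Local Open Scope classical_set_scope.
Local Open Scope ring_scope.

Definition count_below (R : realType) (A : set nat) (n : nat) : R :=
  \sum_(i < n) (\1_A i : R).

Definition upper_density (R : realType) (A : set nat) : \bar R :=
  limn_esup (fun n : nat => ((count_below R A n) / n%:R)%:E).

Definition set_pow (k : nat) (A : set nat) : set ('I_k -> nat) :=
  [set x | forall i, A (x i)].
Arguments set_pow : clear implicits.

Definition in_C_dbar0 (R : realType) (k : nat) (g : ('I_k -> nat) -> nat) : Prop :=
  (0 < k)%N /\
  forall A : set nat, upper_density R A = 0%E ->
    upper_density R (g @` set_pow k A) = 0%E.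
Arguments in_C_dbar0 : clear implicits.

(* Main.v *)
Require Import Defs.
From HB Require Import structures.
From mathcomp Require Import all_boot all_order all_algebra.
From mathcomp Require Import all_classical all_reals all_analysis.
From mathcomp Require Import ring lra.
Import Order.TTheory GRing.Theory Num.Theory.
Local Open Scope classical_set_scope.
Local Open Scope ring_scope.

Section Aux.
Variable R : realType.

Lemma cnt_ge0 (A : set nat) n : 0 <= count_below R A n.
Proof. by apply: sumr_ge0 => i _; rewrite indicE ler0n. Qed.

Lemma cnt_le (A : set nat) n : count_below R A n <= n%:R.
Proof.
rewrite /count_below -[X in _ <= X%:R]card_ord -sumr_const.
apply: ler_sum => i _; rewrite indicE; by case: (_ \in _).
Qed.

Variable e : R.
Hypothesis e0 : 0 < e.
Variable f : nat -> nat.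
Hypothesis Hf : forall n : nat, n%:R * e <= (f n)%:R :> R.

Lemma key (A : set nat) (N M : nat) : N%:R <= M%:R * e ->
  count_below R (f @` A) N <= count_below R A M.
Proof.
move=> NM; rewrite /count_below.
apply: (@le_trans _ _ (\sum_(i < N) \sum_(a < M) (\1_A a * (f a == i)%:R : R))).
  apply: ler_sum => i _.
  have [[a Aa fai]|nfa] := pselect ((f @` A) i); last first.
    rewrite indicE memNset //; apply: sumr_ge0 => j _.
    by rewrite indicE mulr_ge0 ?ler0n.
  rewrite indicE mem_set; last by exists a.
  have aM : (a < M)%N.
    rewrite ltnNge; apply/negP => Ma.
    have : N%:R <= (f a)%:R :> R.
      apply: (le_trans NM); apply: le_trans (Hf a).
      by rewrite ler_pM2r // ler_nat.
    by rewrite ler_nat fai leqNgt ltn_ord.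
  rewrite (bigD1 (Ordinal aM)) //= indicE mem_set // fai eqxx mulr1.
  rewrite lerDl; apply: sumr_ge0 => j _.
  by rewrite indicE mulr_ge0 ?ler0n.
rewrite exchange_big /=; apply: ler_sum => a _.
rewrite -mulr_sumr; apply: ler_piMr; first by rewrite indicE ler0n.
have [faN|Nfa] := ltnP (f a) N.
  rewrite (bigD1 (Ordinal faN)) //= eqxx big1 ?addr0 // => j /eqP jn.
  case: eqP => // h; exfalso; apply: jn; exact/val_inj.
rewrite big1 // => j _; case: eqP => // h.
by move: (ltn_ord j); rewrite -h ltnNge Nfa.
Qed.


Lemma ineq (x M N d : R) : 0 < N -> 0 < M -> 0 < d -> 0 <= x -> x <= M ->
  M * d <= N + d -> x / N <= x / M / d + 1 / N.
Proof.
move=> N0 M0 d0 x0 xM Me.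
set p := x / M / d.
have xE : x = p * M * d by rewrite /p; field; rewrite ?gt_eqF.
have p0 : 0 <= p by apply: divr_ge0; [apply: divr_ge0 => //; exact: ltW|exact: ltW].
have pe : p * d <= 1.
  rewrite leNgt; apply/negP => h.
  have : M < p * d * M by rewrite -{1}[M]mul1r ltr_pM2r.
  by rewrite -mulrA [d * M]mulrC mulrA -xE ltNge xM.
rewrite xE ler_pdivrMr // mulrDl mul1r mulVf ?gt_eqF //.
have : p * M * d <= p * (N + d) by rewrite -mulrA ler_wpM2l.
nra.
Qed.

Lemma step (A : set nat) (n : nat) : (0 < n)%N ->
  count_below R (f @` A) n / n%:R <=
  (count_below R A (Num.truncn (n%:R / e)).+1 / ((Num.truncn (n%:R / e)).+1)%:R) / e + 1 / n%:R.
Proof.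
move=> n0; set M := (Num.truncn (n%:R / e)).+1.
have n0' : 0 < n%:R :> R by rewrite ltr0n.
have hM1 : n%:R / e < M%:R by rewrite /M truncnS_gt.
have hM2 : M%:R <= n%:R / e + 1.
  rewrite /M -addn1 natrD lerD2r truncn_le; apply: divr_ge0; [exact: ler0n|exact: ltW].
have nM : n%:R <= M%:R * e by rewrite -ler_pdivrMr // ltW.
apply: (@le_trans _ _ (count_below R A M / n%:R)).
  rewrite ler_pM2r ?invr_gt0 //; exact: key.
apply: ineq => //.
- exact: cnt_ge0.
- exact: cnt_le.
- by have := hM2; rewrite -(ler_pM2r e0) mulrDl mul1r divfK ?gt_eqF.
Qed.


Lemma main_ineq (A : set nat) :
  (upper_density R (f @` A) <= (e^-1)%:E * upper_density R A)%E.
Proof.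
set a := fun n : nat => (count_below R A n / n%:R)%:E.
set b := fun n : nat => (count_below R (f @` A) n / n%:R)%:E.
have H1 : forall K, (limn_esup b <= (e^-1)%:E * esups a K)%E.
  move=> K; apply/lee_addgt0Pr => d d0.
  set N0 := (Num.truncn (d^-1 + K%:R * e)).+1.
  apply: (@le_trans _ _ (ereal_sup (b @` [set n | (N0 <= n)%N]))).
    rewrite /limn_esup /limf_esup; apply: ereal_inf_lbound.
    exists [set n | (N0 <= n)%N] => //; exists N0 => //.
  apply: ub_ereal_sup => _ [n /= Nn <-].
  have hN0 : d^-1 + K%:R * e < N0%:R by exact: truncnS_gt.
  have nN0 : N0%:R <= n%:R :> R by rewrite ler_nat.
  have n0 : (0 < n)%N by apply: leq_trans Nn.
  have := @step A n n0.

  set M := (Num.truncn (n%:R / e)).+1 => hstep.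
  have hM1 : n%:R / e < M%:R by rewrite /M truncnS_gt.
  have KM : (K <= M)%N.
    rewrite -(ler_nat R); apply: ltW; apply: le_lt_trans hM1.
    rewrite ler_pdivlMr //.
    have : 0 < d^-1 by rewrite invr_gt0.
    lra.
  apply: (@le_trans _ _ ((e^-1 * (count_below R A M / M%:R))%:E + (1 / n%:R)%:E)).
    by rewrite -EFinD lee_fin [e^-1 * _]mulrC.
  apply: leeD.
    rewrite EFinM; apply: lee_wpmul2l.
      by rewrite lee_fin invr_ge0 ltW.
    by apply: ereal_sup_ubound; exists M.
  rewrite lee_fin ler_pdivrMr ?ltr0n //.
  have : d^-1 * d = 1 by rewrite mulVf ?gt_eqF.
  have : 0 < d^-1 by rewrite invr_gt0.
  have : 0 <= K%:R * e :> R by rewrite mulr_ge0 ?ler0n ?ltW.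
  nra.
rewrite /upper_density -/a -/b (limn_esup_lim a) -limeMl //; last exact: is_cvg_esups.
apply: lime_ge; first by apply: is_cvgeZl => //; exact: is_cvg_esups.
by apply: nearW => K; exact: H1.
Qed.

End Aux.

Theorem mainTheorem9 (R : realType) (eps : rat) (f : nat -> nat) :
  0 < eps ->
  (forall n : nat, n%:R * ratr eps <= (f n)%:R :> R) ->
  (forall A : set nat,
     (upper_density R (f @` A) <= ((ratr eps)^-1)%:E * upper_density R A)%E)
  /\ in_C_dbar0 R 1%N (fun x : 'I_1 -> nat => f (x ord0)).
Proof.
move=> eps0 Hf.
have e0 : 0 < ratr eps :> R by rewrite ltr0q.
split; first by move=> A; exact: (@main_ineq R _ e0 f Hf A).
split => // A dA.
have -> : (fun x : 'I_1 -> nat => f (x ord0)) @` set_pow 1 A = f @` A.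
  apply/seteqP; split => _ [x Ax <-].
    by exists (x ord0) => //; exact: Ax.
  by exists (fun _ => x).
apply/eqP; rewrite eq_le; apply/andP; split.
  by have := @main_ineq R _ e0 f Hf A; rewrite dA mule0.
apply: limf_esup_ge0.
  by move=> [N _ /(_ N (leqnn N))].
move=> n; rewrite lee_fin; apply: divr_ge0; [exact: cnt_ge0|exact: ler0n].
Qed.
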